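(* For every positive integer $k$ there exists $n_0$ such that for all $n\ge n_0$, $$\mathrm{exa}_k(n,K_3)=\left\lfloor \frac{(n-1)^2}{4}\right\rfloor+k+1.$$
   Context: For a graph $H$ and a graph $F$, $\mathcal N(H,F)$ denotes the number of subgraphs of $H$ isomorphic to $F$. For a nonnegative integer $k$, $\mathrm{exa}_k(n,F)$ is the largest number of edges of a simple graph $H$ on $n$ vertices with $\mathcal N(H,F)=k$. $K_3$ is the triangle. *)

(* Defs.v *)
From mathcomp Require Import all_boot.
Set Implicit Arguments. Unset Strict Implicit. Unset Printing Implicit Defensive.

Definition simple_graph (n : nat) (E : {set {set 'I_n}}) : bool :=
  [forall e in E, #|e| == 2].

Definition nedges (n : nat) (E : {set {set 'I_n}}) : nat := #|E|.

(* N(H, K_3): number of subgraphs of H isomorphic to the triangle K_3,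
   i.e. the number of 3-element vertex sets all of whose 2-subsets are edges. *)
Definition ntriangles (n : nat) (E : {set {set 'I_n}}) : nat :=
  #|[set T : {set 'I_n} | (#|T| == 3) &&
       [forall e : {set 'I_n}, ((e \subset T) && (#|e| == 2)) ==> (e \in E)]]|.

(* exa_k(n, K_3): the largest number of edges of a simple graph on n vertices
   with exactly k triangles (0 if there is no such graph). *)
Definition exa_K3 (k n : nat) : nat :=
  \max_(E : {set {set 'I_n}} | simple_graph E && (ntriangles E == k)) nedges E.

(* Main.v *)
Require Import Defs.
From mathcomp Require Import all_boot zify.
Set Implicit Arguments. Unset Strict Implicit. Unset Printing Implicit Defensive.

Lemma a1 m : 2 <= m -> (m-2)^2 %/ 4 + (m - 1) = m^2 %/ 4.
Proof. move=> h. rewrite !expnS expn0 !muln1. nia. Qed.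
Lemma a2 m : 3 <= m -> (m-3)^2 %/ 4 + (m - 2) = (m-1)^2 %/ 4.
Proof. move=> h. rewrite !expnS expn0 !muln1. nia. Qed.
Lemma a3 m j : 2 <= j -> 3*j+4 <= m -> (m-4)^2 %/ 4 + j + m + j - 1 <= (m-1)^2 %/ 4 + j + 1.
Proof. move=> h h2. rewrite !expnS expn0 !muln1. nia. Qed.
Lemma a4 m : (m %/ 2) * (m - m %/2) = m^2 %/ 4.
Proof. rewrite !expnS expn0 !muln1. nia. Qed.

Section G.
Variable T : finType.
Implicit Types (E : {set {set T}}) (V X S e : {set T}) (x y z w : T).

Definition tris E := [set S : {set T} | (#|S| == 3) &&
       [forall e : {set T}, ((e \subset S) && (#|e| == 2)) ==> (e \in E)]].
Definition Nbr E x := [set w | [set x; w] \in E].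
Definition Ed E x := [set e in E | x \in e].
Definition simple E := forall e, e \in E -> #|e| = 2.
Definition inside E V := forall e, e \in E -> e \subset V.

Lemma set2_inj x w1 w2 : [set x; w1] = [set x; w2] -> w1 = w2.
Proof.
move=> h. have : w1 \in [set x; w2] by rewrite -h set22.
case/set2P=> // e1. subst w1.
have : w2 \in [set x; x] by rewrite h set22.
by rewrite setUid => /set1P.
Qed.

Lemma nbr_notin E x : simple E -> x \notin Nbr E x.
Proof. move=> hs; rewrite inE; apply/negP=> /hs; by rewrite setUid cards1. Qed.

Lemma nbr_neq E x w : simple E -> w \in Nbr E x -> x != w.
Proof. move=> hs h; apply/negP=> /eqP e; subst w. by rewrite (negbTE (nbr_notin x hs)) in h. Qed.

Lemma edge_neq E x y : simple E -> [set x; y] \in E -> x != y.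
Proof. move=> hs /hs; rewrite cards2; by case: (x != y). Qed.

Lemma deg E x : simple E -> #|Ed E x| = #|Nbr E x|.
Proof.
move=> hs.
have -> : Ed E x = [set [set x; w] | w in Nbr E x].
  apply/setP=> e; rewrite inE; apply/idP/idP.
  - case/andP=> he hx. have := hs e he => /eqP /cards2P [a [b [hab ee]]].
    subst e. move: hx; case/set2P=> ex; subst x.
    + by apply/imsetP; exists b; rewrite // inE.
    + apply/imsetP; exists a; first by rewrite inE setUC.
      by rewrite setUC.
  - case/imsetP=> w; rewrite inE => hw ->. by rewrite hw set21.
rewrite card_in_imset //. by move=> a b _ _ /set2_inj.
Qed.

Lemma nbr_sub E V x : inside E V -> Nbr E x \subset V.
Proof. move=> hi; apply/subsetP=> w; rewrite inE => /hi /subsetP; apply; exact: set22. Qed.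

Lemma two_sub3 (a b c : T) e : e \subset [set a; b; c] -> #|e| = 2 ->
  [\/ e = [set a; b], e = [set a; c] | e = [set b; c]].
Proof.
move=> hs he.
have key : forall p q, e \subset [set p; q] -> e = [set p; q].
  move=> p q hpq. apply/eqP; rewrite eqEcard hpq he; rewrite cards2; by case: (p != q).
case: (boolP (a \in e)) => ha; last first.
  apply: Or33; apply: key; apply/subsetP=> u hu; move/subsetP: hs => /(_ u hu).
  rewrite !inE; case/orP=> [/orP [/eqP eu|->//]|->]; last by rewrite orbT.
  by subst u; rewrite hu in ha.
case: (boolP (b \in e)) => hb; last first.
  apply: Or32; apply: key; apply/subsetP=> u hu; move/subsetP: hs => /(_ u hu).
  rewrite !inE; case/orP=> [/orP [->//|/eqP eu]|->]; last by rewrite orbT.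
  by subst u; rewrite hu in hb.
case: (eqVneq a b) => [eab|nab].
  subst b; apply: Or32; apply: key; apply/subsetP=> u hu; move/subsetP: hs => /(_ u hu).
  by rewrite !inE orbb.
apply: Or31. apply/esym/eqP; rewrite eqEcard he cards2 nab leqnn andbT.
by apply/subsetP=> u; case/set2P=> ->.
Qed.

Lemma card3 (a b c : T) : a != b -> a != c -> b != c -> #|[set a; b; c]| = 3.
Proof.
move=> hab hac hbc. rewrite -setUA cardsU1 cards2 hbc !inE.
by rewrite (negbTE hab) (negbTE hac).
Qed.

Lemma mk_tri E (a b c : T) : [set a; b] \in E -> [set a; c] \in E -> [set b; c] \in E ->
  a != b -> a != c -> b != c -> [set a; b; c] \in tris E.
Proof.
move=> h1 h2 h3 hab hac hbc. rewrite inE card3 //=.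
apply/forallP=> e; apply/implyP=> /andP [hs /eqP he].
by case: (two_sub3 hs he) => ->.
Qed.

Lemma tri_card E S : S \in tris E -> #|S| = 3.
Proof. by rewrite inE => /andP [/eqP]. Qed.

Lemma tri_edge E S e : S \in tris E -> e \subset S -> #|e| = 2 -> e \in E.
Proof.
rewrite inE => /andP [_ /forallP h] hs he. move: (h e); rewrite hs he eqxx. by apply.
Qed.

Lemma cardU_le (U : finType) (A B : {set U}) : #|A :|: B| <= #|A| + #|B|.
Proof. by rewrite -(cardsUI A B) leq_addr. Qed.

Lemma sub_le1 (U : finType) (A : {set U}) a : A \subset [set a] -> #|A| <= 1.
Proof. by move/subset_leq_card; rewrite cards1. Qed.

Definition rem E X := [set e in E | [disjoint e & X]].

Lemma rem_simple E X : simple E -> simple (rem E X).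
Proof. by move=> hs e; rewrite inE => /andP [/hs]. Qed.

Lemma rem_inside E V X : inside E V -> inside (rem E X) (V :\: X).
Proof.
move=> hi e; rewrite inE => /andP [he hd]. apply/subsetP=> u hu.
rewrite inE (subsetP (hi e he) u hu) andbT. apply/negP=> hx.
move: hd; rewrite -setI_eq0 => /eqP /setP /(_ u). by rewrite !inE hu hx.
Qed.

Lemma rem_tris E X : tris (rem E X) \subset tris E.
Proof.
apply/subsetP=> S; rewrite !inE => /andP [-> /forallP h] /=.
apply/forallP=> e; apply/implyP=> he. move: (h e); rewrite he /= inE. by case/andP.
Qed.

Lemma rem_card E X (M : {set {set T}}) :
  (forall e p, e \in E -> p \in e -> p \in X -> e \in M) -> #|E| <= #|rem E X| + #|M|.
Proof.
move=> hM. apply: leq_trans (cardU_le _ _). apply: subset_leq_card.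
apply/subsetP=> e he. rewrite inE in_set he /=.
case: (boolP [disjoint e & X]) => // hd /=.
move: hd; rewrite -setI_eq0 => /set0Pn [p]; rewrite inE => /andP [hp hx].
exact: hM hp hx.
Qed.

Lemma sumI1 (U : finType) (A B : {set U}) a : A :&: B \subset [set a] -> #|A| + #|B| <= #|A :|: B| + 1.
Proof. move/sub_le1=> h; rewrite -cardsUI; lia. Qed.

Lemma sumI1' (U : finType) (A B : {set U}) a : a \in A :&: B -> #|A :|: B| + 1 <= #|A| + #|B|.
Proof. move=> h; rewrite -cardsUI leq_add2l card_gt0; apply/set0Pn; by exists a. Qed.

Lemma edge_in_ed E x y : [set x; y] \in E -> [set x; y] \in Ed E x.
Proof. by move=> h; rewrite inE h set21. Qed.

Lemma ed_int E x y : simple E -> x != y -> Ed E x :&: Ed E y \subset [set [set x; y]].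
Proof.
move=> hs hxy; apply/subsetP=> e; rewrite !inE => /andP [/andP [he hx] /andP [_ hy]].
rewrite eq_sym eqEcard (hs e he) cards2 hxy leqnn andbT.
by apply/subsetP=> u; case/set2P=> ->.
Qed.

Lemma nbrU_le E V x y : inside E V -> #|Nbr E x :|: Nbr E y| <= #|V|.
Proof. move=> hi; apply: subset_leq_card; by rewrite subUset !(nbr_sub _ hi). Qed.

Lemma mantel n : forall V E, #|V| = n -> simple E -> inside E V -> tris E = set0 ->
  #|E| <= n ^ 2 %/ 4.
Proof.
elim/ltn_ind: n => n IH V E hV hs hi ht.
case: (eqVneq E set0) => [->|]; first by rewrite cards0.
case/set0Pn=> e he. have := hs e he => /eqP /cards2P [x [y [hxy ee]]]. subst e.
have hX : [set x; y] \subset V by exact: hi.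
have hV' : #|V :\: [set x; y]| = n - 2.
  by rewrite cardsD (setIidPr hX) cards2 hxy hV.
have n2 : 2 <= n by have := subset_leq_card hX; rewrite cards2 hxy hV.
have IH' := IH (n - 2) ltac:(lia) _ (rem E [set x; y]) hV' (rem_simple (X:=[set x; y]) hs) (rem_inside (X:=[set x; y]) hi).
have ht' : tris (rem E [set x; y]) = set0 by apply/eqP; rewrite -subset0 -ht; exact: rem_tris.
move: IH' => /(_ ht') IH'.
have hc := rem_card (M := Ed E x :|: Ed E y) (X := [set x; y]) _.
have hc' : #|E| <= #|rem E [set x; y]| + #|Ed E x :|: Ed E y|.
  apply: hc=> e p he' hp; case/set2P=> ep; subst p; by rewrite !inE he' hp ?orbT.
have h1 : #|Ed E x :|: Ed E y| + 1 <= #|Ed E x| + #|Ed E y|.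
  by apply: (sumI1' (a := [set x; y])); rewrite !inE he !eqxx /= ?orbT.
have hN : Nbr E x :&: Nbr E y = set0.
  apply/eqP; apply: contraT => /set0Pn [w]; rewrite !inE => /andP [hwx hwy].
  have : [set x; y; w] \in tris E.
    apply: mk_tri => //.
    - by apply: (nbr_neq hs); rewrite inE.
    - by apply: (nbr_neq hs); rewrite inE.
  by rewrite ht inE.
have := cardsUI (Nbr E x) (Nbr E y); rewrite hN cards0 addn0 -!deg // => hd.
have := nbrU_le x y hi; rewrite hV => hU.
have := a1 n2; clear hc; move: ((n - 2) ^ 2 %/ 4) (n ^ 2 %/ 4) IH' => p q IH' ha; lia.
Qed.

Definition Q E p q := [set S in tris E | (p \in S) && (q \in S)].

Lemma nbrI_Q E p q : simple E -> [set p; q] \in E -> #|Nbr E p :&: Nbr E q| <= #|Q E p q|.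
Proof.
move=> hs hpq.
have hne := edge_neq hs hpq.
rewrite -(@card_in_imset _ _ (fun w => [set p; q; w])); last first.
  move=> w1 w2; rewrite !inE => /andP [h1p h1q] _ e.
  have : w1 \in [set p; q; w2] by rewrite -e !inE eqxx !orbT.
  rewrite !inE. have n1 : p != w1 by apply: (nbr_neq hs); rewrite inE.
  have n2 : q != w1 by apply: (nbr_neq hs); rewrite inE.
  rewrite eq_sym (negbTE n1) eq_sym (negbTE n2) /=. by move/eqP.
apply: subset_leq_card; apply/subsetP=> S /imsetP [w]; rewrite !inE => /andP [hwp hwq] ->.
have n1 : p != w by apply: (nbr_neq hs); rewrite inE.
have n2 : q != w by apply: (nbr_neq hs); rewrite inE.
have := mk_tri hpq hwp hwq hne n1 n2; rewrite [in X in X -> _]inE => ->.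
by rewrite !inE !eqxx ?orbT.
Qed.

Lemma tri_uniq E x y z S : S \in tris E -> x \in S -> y \in S -> z \in S ->
  #|[set x; y; z]| = 3 -> S = [set x; y; z].
Proof.
move=> hS hx hy hz h3. apply/eqP; rewrite eq_sym eqEcard h3 (tri_card hS) leqnn andbT.
by apply/subsetP=> u; rewrite !inE -orbA => /or3P [] /eqP ->.
Qed.

Lemma tri_decomp E S : S \in tris E -> exists x y z,
  [/\ S = [set x; y; z], x != y, x != z & y != z].
Proof.
move=> hS. have h3 := tri_card hS.
have : 0 < #|S| by rewrite h3. case/card_gt0P=> x hx.
have : #|S :\ x| == 2 by move: h3; rewrite (cardsD1 x) hx add1n => -[->].
case/cards2P=> y [z [hyz e]].
have hy : y \in S :\ x by rewrite e set21.
have hz : z \in S :\ x by rewrite e set22.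
move: hy hz; rewrite !inE => /andP [hyx _] /andP [hzx _].
exists x, y, z; split => //; try by rewrite eq_sym.
by rewrite -(setD1K hx) e setUA.
Qed.

Lemma inQ E p q S' : S' \in Q E p q -> [/\ S' \in tris E, p \in S' & q \in S'].
Proof. by rewrite /Q => /setIdP [h /andP [h1 h2]]. Qed.

Lemma main n : forall j V E, 0 < j -> 3 * j + 4 <= n -> #|V| = n -> simple E ->
  inside E V -> #|tris E| = j -> #|E| <= (n - 1) ^ 2 %/ 4 + j + 1.
Proof.
elim/ltn_ind: n => n IH j V E hj hn hV hs hi ht.
have : 0 < #|tris E| by rewrite ht. case/card_gt0P=> S hS.
have [x [y [z [eS hxy hxz hyz]]]] := tri_decomp hS.
have exy : [set x; y] \in E by apply: (tri_edge hS); rewrite ?cards2 ?hxy // eS; apply/subsetP=> u; rewrite !inE => /orP [] ->; rewrite ?orbT.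
have exz : [set x; z] \in E by apply: (tri_edge hS); rewrite ?cards2 ?hxz // eS; apply/subsetP=> u; rewrite !inE => /orP [] ->; rewrite ?orbT.
have eyz : [set y; z] \in E by apply: (tri_edge hS); rewrite ?cards2 ?hyz // eS; apply/subsetP=> u; rewrite !inE => /orP [] ->; rewrite ?orbT.
have hSV : S \subset V.
  rewrite eS; apply/subsetP=> u; rewrite !inE -orbA => /or3P [] /eqP ->.
  - exact: (subsetP (hi _ exy)) (set21 _ _).
  - exact: (subsetP (hi _ exy)) (set22 _ _).
  - exact: (subsetP (hi _ exz)) (set22 _ _).
have h3 : #|S| = 3 by rewrite eS card3.
have hV' : #|V :\: S| = n - 3 by rewrite cardsD (setIidPr hSV) h3 hV.
set E' := rem E S.
have hs' : simple E' := rem_simple (X := S) hs.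
have hi' : inside E' (V :\: S) := rem_inside (X := S) hi.
have ht' : #|tris E'| <= j - 1.
  rewrite -ht (cardsD1 S (tris E)) hS add1n subn1 /=. apply: subset_leq_card.
  apply/subsetP=> S' hS'. rewrite in_setD1 (subsetP (rem_tris E S) _ hS') andbT.
  apply/eqP=> e; subst S'.
  have : [set x; y] \in E'.
    by apply: (tri_edge hS'); rewrite ?cards2 ?hxy // eS; apply/subsetP=> u; rewrite !inE => /orP [] ->; rewrite ?orbT.
  rewrite /E' /rem in_set exy /= -setI_eq0 => /eqP /setP /(_ x). by rewrite !inE eS !inE !eqxx.
have hc : #|E| <= #|E'| + #|Ed E x :|: Ed E y :|: Ed E z|.
  apply: rem_card => e p he hp; rewrite eS !inE -orbA => /or3P [] /eqP ep; subst p;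
  by rewrite he hp ?orbT.
have hM1 : #|Ed E x :|: Ed E y| + 1 <= #|Ed E x| + #|Ed E y|.
  by apply: (sumI1' (a := [set x; y])); rewrite !inE exy !eqxx /= ?orbT.
have hM2 : #|Ed E x :|: Ed E y :|: Ed E z| + 2 <= #|Ed E x :|: Ed E y| + #|Ed E z|.
  rewrite -cardsUI leq_add2l.
  have hne : [set x; z] != [set y; z].
    apply/negP=> /eqP e. have : x \in [set y; z] by rewrite -e set21.
    by rewrite !inE (negbTE hxy) (negbTE hxz).
  apply: (@leq_trans #|[set [set x; z]; [set y; z]]|); first by rewrite cards2 hne.
  apply: subset_leq_card; apply/subsetP=> e.
  by case/set2P=> ->; rewrite !inE ?exz ?eyz !eqxx /= ?orbT.
have hN1 := cardsUI (Nbr E x) (Nbr E y).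
have hN2 := cardsUI (Nbr E x :|: Nbr E y) (Nbr E z).
have hN3 : #|(Nbr E x :|: Nbr E y) :&: Nbr E z| <= #|Nbr E x :&: Nbr E z| + #|Nbr E y :&: Nbr E z|.
  by rewrite setIUl cardU_le.
have hN4 : #|Nbr E x :|: Nbr E y :|: Nbr E z| <= n.
  rewrite -hV; apply: subset_leq_card; by rewrite !subUset !(nbr_sub _ hi).
have hQ1 := nbrI_Q hs exy.
have hQ2 := nbrI_Q hs exz.
have hQ3 := nbrI_Q hs eyz.
have hQI1 : #|Q E x y| + #|Q E x z| <= #|Q E x y :|: Q E x z| + 1.
  apply: (sumI1 (a := S)); apply/subsetP=> S'; rewrite in_setI => /andP [/inQ [hS' ha hb] /inQ [_ _ hc']].
  by apply/set1P; rewrite eS; apply: (tri_uniq (E := E)) => //; rewrite card3.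
have hQI2 : #|Q E x y :|: Q E x z| + #|Q E y z| <= #|Q E x y :|: Q E x z :|: Q E y z| + 1.
  apply: (sumI1 (a := S)); apply/subsetP=> S'; rewrite setIUl in_setU !in_setI.
  case/orP=> /andP [/inQ [hS' ha hb] /inQ [_ hc' hd]];
  by apply/set1P; rewrite eS; apply: (tri_uniq (E := E)) => //; rewrite card3.
have hQU : #|Q E x y :|: Q E x z :|: Q E y z| <= j.
  rewrite -ht; apply: subset_leq_card; rewrite !subUset.
  by do !(apply/andP; split); apply/subsetP=> S' /inQ [].
rewrite -!deg // in hN1 hN2.
have hsum : #|E| <= #|E'| + n + j - 1 by lia.
have hm3 : 3 <= n by lia.
case: (posnP #|tris E'|) => hj'.
- have := mantel hV' hs' hi' (cards0_eq hj').
  have := a2 hm3. move: ((n - 3) ^ 2 %/ 4) ((n - 1) ^ 2 %/ 4) => p q. lia.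
- have hIH := IH (n - 3) ltac:(lia) #|tris E'| _ E' hj' ltac:(lia) hV' hs' hi' erefl.
  have hj2 : 2 <= j by lia.
  have := a3 hj2 hn. rewrite (_ : n - 3 - 1 = n - 4) in hIH; last by lia.
  move: ((n - 4) ^ 2 %/ 4) ((n - 1) ^ 2 %/ 4) hIH => p q hIH. lia.
Qed.

Lemma ex_sub (A : {set T}) c : c <= #|A| -> exists2 B : {set T}, B \subset A & #|B| = c.
Proof.
elim: c => [|c IHc] h; first by exists set0; [exact: sub0set | exact: cards0].
have [B hB hc] := IHc (ltnW h).
have : B != A by apply/negP=> /eqP e; move: h; rewrite -e hc ltnn.
move=> hne.
have : 0 < #|A :\: B| by rewrite cardsD (setIidPr hB) hc subn_gt0.
case/card_gt0P=> w; rewrite inE => /andP [hwB hwA].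
exists (w |: B); first by rewrite subUset sub1set hwA hB.
by rewrite cardsU1 hwB hc.
Qed.

Section Constr.
Variables (v u : T) (A Bp K : {set T}).
Hypotheses (vA : v \notin A) (vB : v \notin Bp) (AB : forall p, p \in A -> p \notin Bp)
  (uA : u \in A) (KB : K \subset Bp).

Definition Bip := [set [set p.1; p.2] | p in setX A Bp].
Definition Star := [set [set v; w] | w in u |: K].
Definition Ec := Bip :|: Star.

Lemma uK : u \notin K.
Proof. apply/negP=> /(subsetP KB) h. by rewrite (negbTE (AB uA)) in h. Qed.

Lemma KnA w : w \in K -> w \notin A.
Proof. move=> /(subsetP KB) h; apply/negP=> hA; by rewrite (negbTE (AB hA)) in h. Qed.

Lemma vK w : w \in u |: K -> v != w.
Proof.
move=> h; apply/negP=> /eqP e; subst w; case/setU1P: h => [e|/(subsetP KB) h].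
  by move: vA; rewrite e uA. by move: vB; rewrite h.
Qed.

Lemma card_Bip : #|Bip| = #|A| * #|Bp|.
Proof.
rewrite card_in_imset ?cardsX //.
move=> [a1 b1] [a2 b2] /setXP [h1 h2] /setXP [h3 h4] /= e.
have : a1 \in [set a2; b2] by rewrite -e set21.
case/set2P=> ea; last by subst a1; move: (AB h1); rewrite h4.
subst a2.
have : b1 \in [set a1; b2] by rewrite -e set22.
case/set2P=> eb; last by subst.
by subst b1; move: (AB h1); rewrite h2.
Qed.


Lemma eq_sym_neq (a b : T) : a != b -> b != a. Proof. by rewrite eq_sym. Qed.

Lemma BnA q : q \in Bp -> q \notin A.
Proof. move=> hq; apply/negP=> hqA; move: (AB hqA); by rewrite hq. Qed.

Lemma card_Star : #|Star| = #|K|.+1.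
Proof.
rewrite card_in_imset; first by rewrite cardsU1 uK.
by move=> a b _ _ /set2_inj.
Qed.

Lemma Bip_v e : e \in Bip -> v \notin e.
Proof.
case/imsetP=> [[p q]] /setXP [hp hq] -> /=; apply/negP; case/set2P=> e'; subst.
  by move: vA; rewrite hp. by move: vB; rewrite hq.
Qed.

Lemma card_Ec : #|Ec| = #|A| * #|Bp| + #|K|.+1.
Proof.
rewrite /Ec cardsU card_Bip card_Star.
suff -> : Bip :&: Star = set0 by rewrite cards0 subn0.
apply/eqP; apply: contraT => /set0Pn [e]; rewrite in_setI => /andP [/Bip_v hv].
case/imsetP=> w _ ee; subst e. by rewrite set21 in hv.
Qed.

Lemma simple_Ec : simple Ec.
Proof.
move=> e; case/setUP.
- case/imsetP=> [[p q]] /setXP [hp hq] -> /=. rewrite cards2.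
  by case: eqP => // e'; subst; move: (AB hp); rewrite hq.
- case/imsetP=> w hw ->. by rewrite cards2 vK.
Qed.

Lemma bipE x y : [set x; y] \in Ec -> x != v -> y != v -> (x \in A) = ~~ (y \in A).
Proof.
move=> he hx hy. have hxy := edge_neq simple_Ec he.
case/setUP: he.
- case/imsetP=> [[p q]] /setXP [hp hq] /= e.
  have : x \in [set p; q] by rewrite -e set21.
  have : y \in [set p; q] by rewrite -e set22.
  case/set2P=> ey; case/set2P=> ex; subst.
  + by rewrite eqxx in hxy.
  + by rewrite hp (negbTE (BnA hq)).
  + by rewrite hp (negbTE (BnA hq)).
  + by rewrite eqxx in hxy.
- case/imsetP=> w _ e. have : v \in [set x; y] by rewrite e set21.
  by case/set2P=> e'; subst; rewrite eqxx in hx hy.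
Qed.

Lemma starE y : [set v; y] \in Ec -> y \in u |: K.
Proof.
case/setUP.
- by move/Bip_v; rewrite set21.
- by case/imsetP=> w hw /set2_inj ->.
Qed.

Lemma in_Ec_star w : w \in u |: K -> [set v; w] \in Ec.
Proof. by move=> h; rewrite /Ec inE; apply/orP; right; apply/imsetP; exists w. Qed.

Lemma tris_Ec : tris Ec = [set [set v; u; w] | w in K].
Proof.
apply/setP=> S; apply/idP/idP.
- move=> hS.
  have hvS : v \in S.
    apply: contraT => hv.
    have [a [b [c [eS hab hac hbc]]]] := tri_decomp hS.
    have sub : forall p q, p \in S -> q \in S -> p != q -> [set p; q] \in Ec.
      move=> p q hp hq hpq; apply: (tri_edge hS); last by rewrite cards2 hpq.
      by apply/subsetP=> r; case/set2P=> ->.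
    have nv : forall p, p \in S -> p != v by move=> p hp; apply/negP=> /eqP e; subst; rewrite hp in hv.
    have ha : a \in S by rewrite eS !inE eqxx.
    have hb : b \in S by rewrite eS !inE eqxx ?orbT.
    have hc : c \in S by rewrite eS !inE eqxx ?orbT.
    have e1 := bipE (sub _ _ ha hb hab) (nv _ ha) (nv _ hb).
    have e2 := bipE (sub _ _ ha hc hac) (nv _ ha) (nv _ hc).
    have e3 := bipE (sub _ _ hb hc hbc) (nv _ hb) (nv _ hc).
    move: e1 e2 e3; by case: (a \in A); case: (b \in A); case: (c \in A).
  have : #|S :\ v| == 2 by move: (tri_card hS); rewrite (cardsD1 v) hvS add1n => -[->].
  case/cards2P=> y [z [hyz e]].
  have eS : S = [set v; y; z] by rewrite -(setD1K hvS) e setUA.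
  have hy : y \in S :\ v by rewrite e set21.
  have hz : z \in S :\ v by rewrite e set22.
  move: hy hz; rewrite !in_setD1 => /andP [hyv hyS] /andP [hzv hzS].
  have sub : forall p q, p \in S -> q \in S -> p != q -> [set p; q] \in Ec.
    move=> p q hp hq hpq; apply: (tri_edge hS); last by rewrite cards2 hpq.
    by apply/subsetP=> r; case/set2P=> ->.
  have sy := starE (sub _ _ hvS hyS (eq_sym_neq hyv)).
  have sz := starE (sub _ _ hvS hzS (eq_sym_neq hzv)).
  have eyz := bipE (sub _ _ hyS hzS hyz) hyv hzv.
  case/setU1P: sy => [ey|yK].
  + subst y. case/setU1P: sz => [ez|zK]; first by subst; rewrite eqxx in hyz.
    by apply/imsetP; exists z.
  + have hzA : z \in A by move: eyz; rewrite (negbTE (KnA yK)); case: (z \in A).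
    case/setU1P: sz => [ez|zK]; last by move: (KnA zK); rewrite hzA.
    subst z. apply/imsetP; exists y => //. by rewrite eS setUAC.
- case/imsetP=> w hw ->.
  have hwB : w \in Bp := subsetP KB w hw.
  have nuw : u != w by apply/negP=> /eqP e; subst w; move: uK; rewrite hw.
  apply: mk_tri.
  + by apply: in_Ec_star; rewrite setU11.
  + by apply: in_Ec_star; rewrite setU1r.
  + by rewrite /Ec inE; apply/orP; left; apply/imsetP; exists (u, w); rewrite ?inE ?uA ?hwB.
  + by apply: vK; rewrite setU11.
  + by apply: vK; rewrite setU1r.
  + done.
Qed.

Lemma card_tris_Ec : #|tris Ec| = #|K|.
Proof.
rewrite tris_Ec card_in_imset // => w1 w2 h1 h2 e.
have : w1 \in [set v; u; w2] by rewrite -e !inE eqxx orbT.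
rewrite !inE => /orP [/orP [/eqP e1|/eqP e1]|/eqP] //.
- by have := vK (setU1r u h1); rewrite e1 eqxx.
- by move: uK; rewrite -e1 h1.
Qed.
End Constr.

Lemma construct (v : T) k : 2 <= #|T| - 1 -> k <= (#|T| - 1) - (#|T| - 1) %/ 2 ->
  exists E, [/\ simple E, #|tris E| = k &
     #|E| = (#|T| - 1) %/ 2 * ((#|T| - 1) - (#|T| - 1) %/ 2) + k + 1].
Proof.
move=> hm hk.
set W := [set: T] :\ v.
have hW : #|W| = #|T| - 1 by rewrite /W; have := cardsD1 v [set: T]; rewrite cardsT inE; lia.
have [A hAW hA] := ex_sub (c := (#|T| - 1) %/ 2) (A := W) ltac:(rewrite hW; apply: leq_div).
set Bp := W :\: A.
have hB : #|Bp| = (#|T| - 1) - (#|T| - 1) %/ 2 by rewrite /Bp cardsD (setIidPr hAW) hW hA.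
have [K hKB hK] := ex_sub (c := k) (A := Bp) ltac:(by rewrite hB).
have vA : v \notin A by apply/negP=> /(subsetP hAW); rewrite !inE eqxx.
have vB : v \notin Bp by rewrite /Bp /W !inE eqxx /= andbF.
have AB : forall p, p \in A -> p \notin Bp by move=> p hp; rewrite /Bp !inE hp.
have : 0 < #|A| by rewrite hA; lia.
case/card_gt0P=> u uA.
exists (Ec v u A Bp K); split.
- exact: (simple_Ec vA vB AB uA hKB).
- by rewrite (card_tris_Ec vA vB AB uA hKB).
- by rewrite (card_Ec vA vB AB uA hKB) hA hB hK addn1 addnS.
Qed.

End G.

Theorem theorem1p5 :
  forall k : nat, 0 < k ->
  exists n0 : nat, forall n : nat, n0 <= n ->
    exa_K3 k n = (n - 1) ^ 2 %/ 4 + k + 1.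
Proof.
move=> k hk; exists (3 * k + 4) => n hn.
apply/eqP; rewrite eqn_leq; apply/andP; split.
- apply/bigmax_leqP => E /andP [hs /eqP ht].
  apply: (main (V := [set: 'I_n])) => //; try lia.
  + by rewrite cardsT card_ord.
  + by move=> e he; move/forallP: hs => /(_ e); rewrite he => /eqP.
- have v : 'I_n by apply: (@Ordinal n 0); lia.
  have [E [hs ht he]] := construct v (k := k) ltac:(rewrite card_ord; lia)
     ltac:(rewrite card_ord; lia).
  rewrite card_ord a4 in he.
  rewrite -he. apply: (leq_bigmax_cond (P := fun E => simple_graph E && (ntriangles E == k)) (F := @nedges n)).
  apply/andP; split; last by apply/eqP.
  by apply/forallP=> e; apply/implyP=> /hs ->.
Qed.
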